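(* Let $d,k\in\mathbb{N}$ and $R=\mathbb{R}\langle s^{(1)},\dots,s^{(k-1)}\rangle$. The exponential $\exp:\mathfrak{g}_{d,k}\to\mathcal{G}_{d,k}$ and the logarithm $\log:\mathcal{G}_{d,k}\to\mathfrak{g}_{d,k}$ are each represented by an element of $s^{(k)}+R$, while the group inversion $\mathcal{G}_{d,k}\to\mathcal{G}_{d,k}$, $\mathbf{z}\mapsto\mathbf{z}^{-1}$, is represented by an element of $-s^{(k)}+R$.
   Context: $T_{d,k}=\bigoplus_{\ell=0}^k(\mathbb{R}^d)^{\otimes\ell}$ is the truncated tensor algebra (elements $\mathbf{z}=\mathbf{z}^{(0)}\oplus\dots\oplus\mathbf{z}^{(k)}$) with product the bilinear extension of the tensor product of levels, set to $0$ when the total level exceeds $k$. $\mathfrak{g}_{d,k}$ is the smallest Lie subalgebra (commutator bracket) of $T_{d,k}$ containing $e_1,\dots,e_d\in\mathbb{R}^d$; $\exp(\mathbf{z})=\sum_{\ell=0}^k\mathbf{z}^{\otimes\ell}/\ell!$; $\mathcal{G}_{d,k}=\exp(\mathfrak{g}_{d,k})$, a group; $\log(\mathbf{s})=\sum_{\ell\ge1}\frac{(-1)^{\ell+1}}{\ell}(\mathbf{s}-1)^{\otimes\ell}$. $\mathbb{R}\langle s^{(1)},\dots,s^{(k)}\rangle$ is the free associative $\mathbb{R}$-algebra on non-commuting variables $s^{(1)},\dots,s^{(k)}$ (constants included). For $f$ in it, $\mathrm{eval}_f:T_{d,k}\to T_{d,k}$ is obtained by substituting $\mathbf{z}^{(i)}$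 (viewed in $T_{d,k}$) for $s^{(i)}$ and computing in $T_{d,k}$, with constants mapped to multiples of the unit $1$. A map $\phi$ defined on a subset of $T_{d,k}$ is represented by $f$ if $\phi=\mathrm{eval}_f$ on that subset. *)

(* Defs.v *)
From HB Require Import structures.
From mathcomp Require Import all_boot all_order all_algebra.
Set Implicit Arguments. Unset Strict Implicit. Unset Printing Implicit Defensive.
Import Order.TTheory GRing.Theory Num.Theory.
Local Open Scope ring_scope.

Section TensorAlgebra.
Variables (R : realFieldType) (d k : nat).

(* An element of T_{d,k} is given by its coefficients on words (= basis
   tensors e_{w_1} (x) ... (x) e_{w_l}) over the alphabet 'I_d.  Genuine
   elements of T_{d,k} vanish on words of length > k; all operations below
   produce such functions. *)
Definition tens := seq 'I_d -> R.

Definition tzero : tens := fun _ => 0.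
Definition tone : tens := fun w => if w == [::] then 1 else 0.
Definition tadd (x y : tens) : tens := fun w => x w + y w.
Definition tscale (c : R) (x : tens) : tens := fun w => c * x w.
Definition topp (x : tens) : tens := tscale (-1) x.
Definition tsub (x y : tens) : tens := tadd x (topp y).

Definition tmul (x y : tens) : tens := fun w =>
  if (size w <= k)%N
  then \sum_(i < (size w).+1) x (take i w) * y (drop i w)
  else 0.

Definition tpow (x : tens) (n : nat) : tens := iter n (tmul x) tone.

Definition tsum (n : nat) (f : nat -> tens) : tens :=
  foldr tadd tzero (map f (iota 0 n)).

Definition tbasis (i : 'I_d) : tens := fun w => if w == [:: i] then 1 else 0.

Definition tlevel (l : nat) (z : tens) : tens :=
  fun w => if size w == l then z w else 0.

Definition tbracket (x y : tens) : tens := tsub (tmul x y) (tmul y x).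

Definition lie_closed (S : tens -> Prop) : Prop :=
  [/\ S tzero,
      forall x y, S x -> S y -> S (tadd x y),
      forall c x, S x -> S (tscale c x),
      forall x y, S x -> S y -> S (tbracket x y)
    & forall i, S (tbasis i)].

Definition in_lie (x : tens) : Prop :=
  forall S : tens -> Prop, lie_closed S -> S x.

Definition texp (z : tens) : tens :=
  tsum k.+1 (fun l => tscale (l`!%:R)^-1 (tpow z l)).

(* log(s) = sum_{l>=1} (-1)^{l+1}/l (s - 1)^{(x) l}; for s in G_{d,k} the
   terms with l > k vanish, so the sum is taken over 1 <= l <= k. *)
Definition tlog (s : tens) : tens :=
  tsum k (fun l => tscale ((-1) ^+ l.+2 / l.+1%:R) (tpow (tsub s tone) l.+1)).

Definition in_group (s : tens) : Prop := exists z, in_lie z /\ s = texp z.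

(* The free associative algebra R<s^{(1)}, ..., s^{(k)}>: an element is a
   finite R-linear combination of words in the non-commuting variables; a
   word is a seq nat, the letter i standing for s^{(i)} (the empty word is
   the constant 1). *)
Definition ncpoly := seq (R * seq nat).

Definition ncpoly_over (m : nat) (f : ncpoly) : bool :=
  all (fun t => all (fun i => (0 < i <= m)%N) t.2) f.

Definition ncvar (i : nat) : ncpoly := [:: (1, [:: i])].
Definition ncadd (f g : ncpoly) : ncpoly := f ++ g.
Definition ncopp (f : ncpoly) : ncpoly := [seq (- t.1, t.2) | t <- f].

Definition eval_word (w : seq nat) (z : tens) : tens :=
  foldr (fun i acc => tmul (tlevel i z) acc) tone w.

Definition ncpoly_eval (f : ncpoly) (z : tens) : tens :=
  foldr (fun t acc => tadd (tscale t.1 (eval_word t.2 z)) acc) tzero f.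

Definition represents (D : tens -> Prop) (phi : tens -> tens) (f : ncpoly) :=
  forall z, D z -> ncpoly_eval f z = phi z.

End TensorAlgebra.

(* Main.v *)
Require Import Defs.
From mathcomp Require Import all_boot all_order all_algebra ring.
From Stdlib Require Import FunctionalExtensionality.
Set Implicit Arguments. Unset Strict Implicit. Unset Printing Implicit Defensive.
Import Order.TTheory GRing.Theory Num.Theory.
Local Open Scope ring_scope.

Section Work.
Variables (R : realFieldType) (d k : nat).
Notation T := (tens R d).
Implicit Types (x y z : T) (w v : seq 'I_d).

Lemma foldr_taddE (I : Type) (s : seq I) (f : I -> T) w :
  foldr (@tadd R d) (@tzero R d) (map f s) w = \sum_(l <- s) f l w.
Proof.
elim: s => [|a s IH] /=; first by rewrite big_nil.
by rewrite big_cons /tadd IH.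
Qed.

Lemma tsumE n (f : nat -> T) w : tsum n f w = \sum_(l <- iota 0 n) f l w.
Proof. exact: foldr_taddE. Qed.

Lemma ncevalE (f : ncpoly R) z w :
  ncpoly_eval k f z w = \sum_(t <- f) t.1 * eval_word k t.2 z w.
Proof.
elim: f => [|a f IH] /=; first by rewrite big_nil.
by rewrite big_cons /tadd /tscale IH.
Qed.

Lemma size_take_le (n : nat) w : (size (take n w) <= size w)%N.
Proof. by rewrite size_take_min geq_minr. Qed.

Lemma size_drop_le (n : nat) w : (size (drop n w) <= size w)%N.
Proof. by rewrite size_drop leq_subr. Qed.

Lemma tmul_ext x x' y y' :
  (forall v, (size v <= k)%N -> x v = x' v) ->
  (forall v, (size v <= k)%N -> y v = y' v) ->
  tmul k x y = tmul k x' y'.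
Proof.
move=> Hx Hy; apply: functional_extensionality => w; rewrite /tmul.
case: ifP => // Hw; apply: eq_bigr => i _.
by rewrite Hx ?Hy // (leq_trans _ Hw) // ?size_take_le ?size_drop_le.
Qed.

Lemma tmul_suml (I : Type) (s : seq I) (F : I -> T) y w :
  tmul k (fun v => \sum_(i <- s) F i v) y w = \sum_(i <- s) tmul k (F i) y w.
Proof.
rewrite /tmul; case: ifP => _; last by rewrite big1.
under eq_bigr do rewrite mulr_suml.
by rewrite exchange_big.
Qed.

Lemma tmul_sumr (I : Type) (s : seq I) (F : I -> T) x w :
  tmul k x (fun v => \sum_(i <- s) F i v) w = \sum_(i <- s) tmul k x (F i) w.
Proof.
rewrite /tmul; case: ifP => _; last by rewrite big1.
under eq_bigr do rewrite mulr_sumr.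
by rewrite exchange_big.
Qed.

Lemma tmul_addl x x' y w : tmul k (tadd x x') y w = tmul k x y w + tmul k x' y w.
Proof.
rewrite /tmul /tadd; case: ifP => _; last by rewrite addr0.
by rewrite -big_split; apply: eq_bigr => i _; rewrite mulrDl.
Qed.

Lemma tmul_addr x y y' w : tmul k x (tadd y y') w = tmul k x y w + tmul k x y' w.
Proof.
rewrite /tmul /tadd; case: ifP => _; last by rewrite addr0.
by rewrite -big_split; apply: eq_bigr => i _; rewrite mulrDr.
Qed.

Lemma tmul_scaler c x y w : tmul k x (fun v => c * y v) w = c * tmul k x y w.
Proof.
rewrite /tmul; case: ifP => _; last by rewrite mulr0.
by rewrite mulr_sumr; apply: eq_bigr => i _; rewrite mulrCA.
Qed.

Lemma tmul_scalel c x y w : tmul k (fun v => c * x v) y w = c * tmul k x y w.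
Proof.
rewrite /tmul; case: ifP => _; last by rewrite mulr0.
by rewrite mulr_sumr; apply: eq_bigr => i _; rewrite mulrA.
Qed.

Lemma tmul_big w x y : (size w > k)%N -> tmul k x y w = 0.
Proof. by move=> H; rewrite /tmul leqNgt H. Qed.

Lemma tmul1l x w : tmul k (@tone R d) x w = if (size w <= k)%N then x w else 0.
Proof.
rewrite /tmul; case: ifP => // _.
rewrite big_ord_recl /= take0 drop0 /tone eqxx mul1r big1 ?addr0 // => i _.
case: eqP; last by rewrite mul0r.
move/(congr1 size); rewrite size_takel //=; exact: ltn_ord.
Qed.

Lemma tmul1r x w : tmul k x (@tone R d) w = if (size w <= k)%N then x w else 0.
Proof.
rewrite /tmul; case: ifP => // _.
rewrite big_ord_recr /= take_size drop_size /tone eqxx mulr1 big1 ?add0r // => i _.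
case: eqP; last by rewrite mulr0.
move/(congr1 size); rewrite size_drop /= => /eqP; rewrite subn_eq0 leqNgt.
by rewrite ltn_ord.
Qed.


End Work.

Section Work2.
Variables (R : realFieldType) (d k : nat).
Notation T := (tens R d).
Implicit Types (x y z : T) (w v : seq 'I_d).
Lemma ev0 z u w : (size w != sumn u) || ((0 < size u)%N && (k < size w)%N) ->
  eval_word k u z w = 0.
Proof.
elim: u w => [|a u IH] w /=.
  by rewrite orbF /tone; case: w.
case/orP => H.
  rewrite /tmul; case: ifP => // Hw; apply: big1 => i _.
  rewrite /tlevel size_takel; last by rewrite -ltnS.
  case: eqP => [Ei|]; last by rewrite mul0r.
  rewrite IH ?mulr0 // size_drop Ei; apply/orP; left.
  apply: contra H => /eqP <-; rewrite subnKC //.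
  by rewrite -Ei -ltnS.
by rewrite tmul_big.
Qed.
Lemma ev_big z u : (k < sumn u)%N -> eval_word k u z = fun _ => 0.
Proof.
move=> Hu; apply: functional_extensionality => w; apply: ev0.
case: eqP => //= ->; rewrite Hu andbT.
by case: u Hu.
Qed.

Lemma sumn_ge u m : m \in u -> (m <= sumn u)%N.
Proof.
elim: u => [|a u IH] //=; rewrite inE => /orP[/eqP -> |/IH]; first exact: leq_addr.
by move=> H; exact: (leq_trans H (leq_addl _ _)).
Qed.

Lemma sumn_gt u : all (fun i => 0 < i)%N u -> k \in u -> u != [:: k] -> (k < sumn u)%N.
Proof.
case: u => [|a u] //= /andP[a0 allu]; rewrite inE => /orP[/eqP <-|Hk] Hne.
  case: u allu Hne => [|b u] /=; first by rewrite eqxx.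
  by case/andP => b0 _ _; rewrite -[X in (X < _)%N]addn0 ltn_add2l (leq_trans b0) ?leq_addr.
by rewrite -add1n; apply: leq_add a0 (sumn_ge Hk).
Qed.

Lemma decomp y v : y [::] = 0 -> (size v <= k)%N ->
  y v = \sum_(i <- iota 1 k) tlevel i y v.
Proof.
move=> y0 Hv; case: v Hv => [|a v] Hv.
  by rewrite y0 big1_seq // => i /andP[_]; rewrite mem_iota /tlevel /=; case: i.
have Hm : (size (a :: v) \in iota 1 k) by rewrite mem_iota /= add1n ltnS Hv.
rewrite (bigD1_seq _ Hm (iota_uniq _ _)) /= big1 ?addr0 /tlevel ?eqxx //.
by move=> i; rewrite eq_sym => /negbTE ->.
Qed.

Fixpoint words (l : nat) : seq (seq nat) :=
  if l is l'.+1 then [seq i :: u | i <- iota 1 k, u <- words l'] else [:: [::]].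

Lemma pow_expand y l : y [::] = 0 ->
  tpow k y l = fun w => \sum_(u <- words l) eval_word k u y w.
Proof.
move=> y0; elim: l => [|l IH].
  apply: functional_extensionality => w; rewrite big_seq1 //.
apply: functional_extensionality => w.
have -> : tpow k y l.+1 = tmul k y (tpow k y l) by [].
rewrite IH.
rewrite (@tmul_ext _ _ k y (fun v => \sum_(i <- iota 1 k) tlevel i y v) _ _ _
   (fun v _ => erefl)); last by move=> v Hv; exact: decomp.
rewrite tmul_suml big_allpairs_dep /=; apply: eq_bigr => i _.
by rewrite tmul_sumr.
Qed.

Lemma words_prop l u : u \in words l -> size u = l /\ all (fun i => 0 < i <= k)%N u.
Proof.
elim: l u => [|l IH] u /=; first by rewrite inE => /eqP ->.
case/allpairsP => [[i v] /= [Hi Hv ->]].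
have [<- Hall] := IH _ Hv; split => //=.
by rewrite Hall andbT; move: Hi; rewrite mem_iota add1n ltnS.
Qed.

Definition Fc (c : nat -> R) (e : nat -> nat) n : ncpoly R :=
  flatten [seq [seq (c l, u) | u <- words (e l)] | l <- iota 0 n].
Definition gF c e n : ncpoly R := [seq t <- Fc c e n | k \notin t.2].

Lemma Fc_letters c e n t : t \in Fc c e n -> all (fun i => 0 < i <= k)%N t.2.
Proof.
case/flatten_mapP => l _ /mapP [u Hu ->] /=.
by have [_ ->] := words_prop Hu.
Qed.

Lemma Fc_eval c e n y w : y [::] = 0 ->
  ncpoly_eval k (Fc c e n) y w = tsum n (fun l => tscale (c l) (tpow k y (e l))) w.
Proof.
move=> y0; rewrite ncevalE tsumE big_flatten big_map; apply: eq_bigr => l _.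
by rewrite big_map /tscale (pow_expand _ y0) mulr_sumr.
Qed.

Lemma split_k (F : ncpoly R) y w :
  (forall t, t \in F -> all (fun i => 0 < i <= k)%N t.2) ->
  ncpoly_eval k F y w = (\sum_(t <- F | t.2 == [:: k]) t.1) * eval_word k [:: k] y w
     + ncpoly_eval k [seq t <- F | k \notin t.2] y w.
Proof.
move=> HF; rewrite !ncevalE big_filter (bigID (fun t => k \in t.2)) /=; congr (_ + _).
rewrite mulr_suml big_mkcond [RHS]big_mkcond big_seq [RHS]big_seq.
apply: eq_bigr => t Ht; have := HF _ Ht.
case: (boolP (t.2 == [:: k])) => [/eqP -> //|Hne Hall]; first by rewrite inE eqxx.
case: ifP => // Hk; rewrite ev_big ?mulr0 // sumn_gt //.
by apply: sub_all Hall => i /andP[].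
Qed.

Lemma sum_pred1 (s : seq nat) j (F : nat -> R) : uniq s -> j \in s ->
  \sum_(i <- s | i == j) F i = F j.
Proof.
move=> us js; rewrite big_mkcond (bigD1_seq j) //= eqxx big1 ?addr0 //.
by move=> i /negbTE ->.
Qed.

Lemma words_k (a : R) m : (0 < k)%N ->
  \sum_(u <- words m | u == [:: k]) a = if m == 1%N then a else 0.
Proof.
move=> k0; case: ifP => [/eqP ->|Hm].
  rewrite big_mkcond big_allpairs_dep.
  rewrite (eq_bigr (fun i => if i == k then a else 0)); last first.
    by move=> i _; rewrite big_seq1 eqseq_cons andbT.
  by rewrite -big_mkcond sum_pred1 ?iota_uniq // mem_iota add1n ltnS k0 leqnn.
rewrite big1_seq // => u /andP[/eqP -> /words_prop [/= Hs _]].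
by move: Hm; rewrite -Hs.
Qed.

Lemma Fc_coef c e n : (0 < k)%N ->
  \sum_(t <- Fc c e n | t.2 == [:: k]) t.1 = \sum_(l <- iota 0 n | e l == 1%N) c l.
Proof.
move=> k0; rewrite big_flatten big_map [RHS]big_mkcond; apply: eq_bigr => l _.
by rewrite big_map /= words_k.
Qed.

Lemma gF_over c e n : ncpoly_over k.-1 (gF c e n).
Proof.
apply/allP => t; rewrite mem_filter => /andP[nk /Fc_letters Ht].
apply/allP => i iu; have /andP[i0 ik] := allP Ht i iu.
rewrite i0 /= -ltnS prednK ?(leq_trans i0 ik) // ltn_neqAle ik andbT.
by apply: contraNneq nk => <-.
Qed.

Lemma rep_gen c e n y w : (0 < k)%N -> y [::] = 0 ->
  tsum n (fun l => tscale (c l) (tpow k y (e l))) w =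
  (\sum_(l <- iota 0 n | e l == 1%N) c l) * eval_word k [:: k] y w
    + ncpoly_eval k (gF c e n) y w.
Proof.
move=> k0 y0; rewrite -Fc_eval // split_k; last exact: Fc_letters.
by rewrite Fc_coef.
Qed.

Lemma ev_shift z u : z [::] = 1 -> all (fun i => 0 < i)%N u ->
  eval_word k u (tsub z (@tone R d)) = eval_word k u z.
Proof.
move=> z1; elim: u => [|a u IH] //= /andP[a0 /IH ->]; congr tmul.
apply: functional_extensionality => w; rewrite /tlevel /tsub /tadd /topp /tscale /tone.
case: eqP => // Hs; case: eqP => [Hw|]; last by rewrite mulr0 addr0.
by move: Hs a0; rewrite Hw /= => <-.
Qed.

Lemma nc_shift m (g : ncpoly R) z w : z [::] = 1 -> ncpoly_over m g ->
  ncpoly_eval k g (tsub z (@tone R d)) w = ncpoly_eval k g z w.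
Proof.
move=> z1 /allP Hg; rewrite !ncevalE big_seq [RHS]big_seq; apply: eq_bigr => t Ht.
rewrite ev_shift //; apply: sub_all (Hg _ Ht) => i /andP[] //.
Qed.

Lemma nc_add (f g : ncpoly R) z w :
  ncpoly_eval k (ncadd f g) z w = ncpoly_eval k f z w + ncpoly_eval k g z w.
Proof. by rewrite !ncevalE big_cat. Qed.

Lemma in_lie_nil z : in_lie k z -> z [::] = 0.
Proof.
move=> H; apply: (H (fun x : T => x [::] = 0)); split => //.
- by move=> x y; rewrite /tadd => -> ->; rewrite addr0.
- by move=> c x; rewrite /tscale => ->; rewrite mulr0.
- move=> x y Hx Hy; rewrite /tbracket /tsub /tadd /topp /tscale /tmul /=.
  by rewrite !big_ord1 /= Hx Hy !mulr0 addr0.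
Qed.

Lemma tpow_nil y l : y [::] = 0 -> tpow k y l.+1 [::] = 0.
Proof.
move=> y0; have -> : tpow k y l.+1 = tmul k y (tpow k y l) by [].
by rewrite /tmul /= big_ord1 y0 mul0r.
Qed.

Lemma texp_nil x : x [::] = 0 -> texp k x [::] = 1.
Proof.
move=> x0; rewrite /texp tsumE /= big_cons /tscale /= /tone eqxx mulr1 invr1.
by rewrite big1_seq ?addr0 // => l /andP[_]; rewrite mem_iota; case: l => // l _; rewrite tpow_nil // mulr0.
Qed.

Lemma triangle N (G : nat -> nat -> R) :
  \sum_(0 <= i < N) \sum_(0 <= j < i.+1) G i j =
  \sum_(0 <= j < N) \sum_(j <= i < N) G i j.
Proof.
rewrite (@eq_big_nat _ _ _ 0 N _ (fun i => \sum_(0 <= j < N) if (j < i.+1)%N then G i j else 0)); last first.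
  by move=> i /andP[_ iN]; rewrite (big_nat_widen _ _ _ _ _ iN) big_mkcond.
rewrite exchange_big_nat; apply: eq_bigr => j _.
rewrite (big_nat_widenl _ _ _ _ _ (leq0n j)) big_mkcond; apply: eq_bigr => i _.
by rewrite ltnS.
Qed.

Lemma tmulA x y z : tmul k (tmul k x y) z = tmul k x (tmul k y z).
Proof.
apply: functional_extensionality => w; rewrite /tmul; case: ifP => Hw //.
set n := size w.
pose F j i := x (take j w) * y (take (i - j) (drop j w)) * z (drop i w).
transitivity (\sum_(0 <= i < n.+1) \sum_(0 <= j < i.+1) F j i).
  rewrite big_mkord; apply: eq_bigr => i _.
  have iw : (i <= n)%N by rewrite -ltnS.
  rewrite size_takel // (leq_trans iw Hw) big_mkord mulr_suml; apply: eq_bigr => j _.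
  have ji : (j <= i)%N by rewrite -ltnS.
  rewrite /F take_takel // take_drop subnK //.
rewrite triangle big_mkord; apply: eq_bigr => j _.
have jw : (j <= n)%N by rewrite -ltnS.
rewrite size_drop (leq_trans (leq_subr _ _) Hw) -{1}(add0n j) big_addn subSn //.
rewrite big_mkord mulr_sumr; apply: eq_bigr => m _.
by rewrite /F addnK drop_drop mulrA.
Qed.

Lemma tele (P : nat -> R) n :
  \sum_(l <- iota 0 n) (-1)^+l * P l + \sum_(l <- iota 0 n) (-1)^+l * P l.+1
  = P 0%N - (-1)^+n * P n.
Proof.
elim: n => [|n IH]; first by rewrite !big_nil expr0 mul1r addr0 subrr.
rewrite -addn1 iotaD !big_cat /= !big_seq1 add0n addrACA IH addn1 exprS.
ring.
Qed.

Lemma tpow_small y l w : y [::] = 0 -> (size w < l)%N -> tpow k y l w = 0.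
Proof.
move=> y0; elim: l w => [|l IH] w Hw //.
have -> : tpow k y l.+1 = tmul k y (tpow k y l) by [].
rewrite /tmul; case: ifP => // _; apply: big1 => -[[|i] Hi] _ /=.
  by rewrite take0 y0 mul0r.
rewrite IH ?mulr0 // size_drop ltn_psubLR //.
  by rewrite (leq_trans Hw) // addSn ltnS leq_addl.
by case: l IH Hw => // _; rewrite ltnS leqn0 => /eqP Hs; move: Hi; rewrite Hs.
Qed.

Lemma pow_tmul y l : tmul k (tpow k y l) y = tpow k y l.+1.
Proof.
elim: l => [|l IH].
  apply: functional_extensionality => w.
  have -> : tpow k y 1 = tmul k y (tpow k y 0) by [].
  by rewrite tmul1l tmul1r.
have -> : tpow k y l.+2 = tmul k y (tpow k y l.+1) by [].
have -> : tpow k y l.+1 = tmul k y (tpow k y l) by [].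
by rewrite tmulA IH.
Qed.

Lemma inverse z : z [::] = 1 ->
  let y := tsub z (@tone R d) in
  let S := tsum k.+1 (fun l => tscale ((-1) ^+ l) (tpow k y l)) in
  tmul k z S = @tone R d /\ tmul k S z = @tone R d.
Proof.
move=> z1 y S.
have y0 : y [::] = 0.
  rewrite /y /tsub /tadd /topp /tscale z1 /tone eqxx; ring.
have Ez : z = tadd (@tone R d) y.
  by apply: functional_extensionality => w; rewrite /y /tsub /topp /tscale /tadd /=; ring.
have ES : S = fun v => \sum_(l <- iota 0 k.+1) (-1)^+l * tpow k y l v.
  by apply: functional_extensionality => v; rewrite /S tsumE.
have Hbig w : (k < size w)%N -> @tone R d w = 0.
  by rewrite /tone; case: w.
have Hend w : (size w <= k)%N -> tpow k y 0 w - (-1) ^+ k.+1 * tpow k y k.+1 w = @tone R d w.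
  by move=> Hw; rewrite (@tpow_small y k.+1) ?ltnS // mulr0 subr0.
split; apply: functional_extensionality => w; have [Hw|Hw] := leqP (size w) k;
  try by rewrite tmul_big // Hbig.
- rewrite {1}Ez tmul_addl tmul1l Hw ES tmul_sumr.
  under [X in _ + X = _]eq_bigr do rewrite tmul_scaler.
  by rewrite -(Hend w Hw) -(tele (fun l => tpow k y l w)).
- rewrite Ez tmul_addr tmul1r Hw ES tmul_suml.
  under [X in _ + X = _]eq_bigr do rewrite tmul_scalel pow_tmul.
  by rewrite -(Hend w Hw) -(tele (fun l => tpow k y l w)).
Qed.
End Work2.

Theorem lemma3p3 (R : realFieldType) (d k : nat) (hk : (0 < k)%N) :
  (exists g : ncpoly R, ncpoly_over k.-1 g /\
     represents k (@in_lie R d k) (@texp R d k) (ncadd (ncvar R k) g)) /\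
  (exists g : ncpoly R, ncpoly_over k.-1 g /\
     represents k (@in_group R d k) (@tlog R d k) (ncadd (ncvar R k) g)) /\
  (exists g : ncpoly R, ncpoly_over k.-1 g /\
     forall z : tens R d, in_group k z ->
       tmul k z (ncpoly_eval k (ncadd (ncopp (ncvar R k)) g) z) = @tone R d /\
       tmul k (ncpoly_eval k (ncadd (ncopp (ncvar R k)) g) z) z = @tone R d).
Proof.
have k1 : (1 \in iota 0 k.+1)%N by rewrite mem_iota.
have k0 : (0 \in iota 0 k)%N by rewrite mem_iota.
split; [|split].
- exists (gF k (fun l => (l`!%:R)^-1) id k.+1); split; first exact: gF_over.
  move=> z Hz; apply: functional_extensionality => w.
  rewrite nc_add /texp (@rep_gen R d k (fun l => (l`!%:R)^-1) id k.+1 z w hk (in_lie_nil Hz)).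
  rewrite (@sum_pred1 R _ 1%N (fun l => (l`!%:R)^-1)) ?iota_uniq //.
  congr (_ + _); rewrite ncevalE big_seq1 /=.
  by rewrite (_ : 1`! = 1%N) // invr1.
- exists (gF k (fun l => (-1) ^+ l.+2 / l.+1%:R) succn k); split; first exact: gF_over.
  move=> _ [x [Hx ->]]; apply: functional_extensionality => w.
  have z1 := texp_nil k (in_lie_nil Hx).
  have y0 : tsub (texp k x) (@tone R d) [::] = 0.
    by rewrite /tsub /topp /tscale /tadd /= z1 /tone eqxx; ring.
  rewrite nc_add /tlog (@rep_gen R d k (fun l => (-1) ^+ l.+2 / l.+1%:R) succn k _ w hk y0).
  rewrite (nc_shift k w z1 (gF_over _ _ _ _)) (ev_shift k z1); last by rewrite /= hk.
  rewrite (eq_bigl (fun l => l == 0%N)) //.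
  rewrite (@sum_pred1 R _ 0%N (fun l => (-1) ^+ l.+2 / l.+1%:R)) ?iota_uniq //.
  congr (_ + _); rewrite ncevalE big_seq1 /=.
  by rewrite expr2 mulrNN mulr1 divr1.
- exists (gF k (fun l => (-1) ^+ l) id k.+1); split; first exact: gF_over.
  move=> _ [x [Hx ->]].
  have z1 := texp_nil k (in_lie_nil Hx).
  have y0 : tsub (texp k x) (@tone R d) [::] = 0.
    by rewrite /tsub /topp /tscale /tadd /= z1 /tone eqxx; ring.
  have [H1 H2] := inverse k z1.
  set S := tsum _ _ in H1 H2.
  have -> : ncpoly_eval k (ncadd (ncopp (ncvar R k)) (gF k (fun l => (-1) ^+ l) id k.+1)) (texp k x) = S.
    apply: functional_extensionality => w.
    rewrite /S (@rep_gen R d k (fun l => (-1) ^+ l) id k.+1 _ w hk y0).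
    rewrite (nc_shift k w z1 (gF_over _ _ _ _)) (ev_shift k z1) ?nc_add; last by rewrite /= hk.
    rewrite (@sum_pred1 R _ 1%N (fun l => (-1) ^+ l)) ?iota_uniq //.
    congr (_ + _); rewrite ncevalE big_seq1 /=.
    by rewrite expr1.
  by split.
Qed.
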